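(* For every $\theta>1/3$ there is a constant $C(\theta)<\infty$ such that for every cubic polynomial $p(x)=x^3+ex^2+fx+g$ with $e,f,g\in\mathbb R$, $$\sum_{m\in\mathbb Z}\frac{1}{\langle p(m)\rangle^{\theta}}\le C(\theta).$$
   Context: $\langle x\rangle:=1+|x|$. *)

(* Defs.v *)
From HB Require Import structures.
From mathcomp Require Import all_boot all_order all_algebra.
From mathcomp Require Import all_classical all_reals all_analysis.
Set Implicit Arguments. Unset Strict Implicit. Unset Printing Implicit Defensive.
Import Order.TTheory GRing.Theory Num.Theory.
Local Open Scope ring_scope.

(* Japanese bracket <x> := 1 + |x| *)
Definition jbr (R : realType) (x : R) : R := 1 + `|x|.

Definition cubic (R : realType) (e f g x : R) : R := x ^+ 3 + e * x ^+ 2 + f * x + g.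

(* Main.v *)
Require Import Defs.
From HB Require Import structures.
From mathcomp Require Import all_boot all_order all_algebra.
From mathcomp Require Import all_classical all_reals all_analysis.
From mathcomp Require Import lra ring zify.
Import Order.TTheory GRing.Theory Num.Theory.
Local Open Scope ring_scope.
Set Implicit Arguments. Unset Strict Implicit.


Lemma hb (R : realType) (p D m T : R) : 0 < m -> m <= `|D| -> `|p| <= T -> `|p / D| <= T / m.
Proof.
move=> m0 mD pT.
have D0 : 0 < `|D| by apply: lt_le_trans mD.
rewrite normrM normfV ler_pM //.
by rewrite lef_pV2 // posrE.
Qed.

Lemma prod3 (R : realType) (x y z X Y Z : R) : 0 <= x -> 0 <= y -> 0 <= z ->
  x <= X -> y <= Y -> z <= Z -> x * y * z <= X * Y * Z.
Proof.
move=> x0 y0 z0 xX yY zZ.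
by rewrite ler_pM // ?mulr_ge0 // ler_pM.
Qed.

Lemma dd (R : realType) (e f g x a b c d T : R) : 0 < d -> d <= a -> d <= b -> d <= c ->
  `|cubic e f g x| <= T -> `|cubic e f g (x + a)| <= T ->
  `|cubic e f g (x + a + b)| <= T -> `|cubic e f g (x + a + b + c)| <= T ->
  d ^+ 3 <= 2 * T.
Proof.
move=> d0 da db dc h0 h1 h2 h3.
have a0 : 0 < a by apply: lt_le_trans da.
have b0 : 0 < b by apply: lt_le_trans db.
have c0 : 0 < c by apply: lt_le_trans dc.
set D0 := - (a * (a + b) * (a + b + c)).
set D1 := a * b * (b + c).
set D2 := - ((a + b) * b * c).
set D3 := (a + b + c) * (b + c) * c.
have id : cubic e f g x / D0 + cubic e f g (x + a) / D1 + cubic e f g (x + a + b) / D2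
   + cubic e f g (x + a + b + c) / D3 = 1.
  rewrite /cubic /D0 /D1 /D2 /D3; field.
  by rewrite !gt_eqF ?addr_gt0.
have m0 : 0 < 2 * d ^+ 3 by rewrite mulr_gt0 // exprn_gt0.
have B0 : 2 * d ^+ 3 <= `|D0|.
  rewrite /D0 normrN ger0_norm; last by rewrite !mulr_ge0 // ?ltW // ?addr_gt0.
  have -> : 2 * d ^+ 3 = d * (d + d) * d by ring.
  apply: prod3; lra.
have B1 : 2 * d ^+ 3 <= `|D1|.
  rewrite /D1 ger0_norm; last by rewrite !mulr_ge0 // ?ltW // ?addr_gt0.
  have -> : 2 * d ^+ 3 = d * d * (d + d) by ring.
  apply: prod3; lra.
have B2 : 2 * d ^+ 3 <= `|D2|.
  rewrite /D2 normrN ger0_norm; last by rewrite !mulr_ge0 // ?ltW // ?addr_gt0.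
  have -> : 2 * d ^+ 3 = (d + d) * d * d by ring.
  apply: prod3; lra.
have B3 : 2 * d ^+ 3 <= `|D3|.
  rewrite /D3 ger0_norm; last by rewrite !mulr_ge0 // ?ltW // ?addr_gt0.
  have -> : 2 * d ^+ 3 = (d + d) * d * d by ring.
  apply: prod3; lra.
have u0 := hb m0 B0 h0.
have u1 := hb m0 B1 h1.
have u2 := hb m0 B2 h2.
have u3 := hb m0 B3 h3.
have : 1 <= 4 * (T / (2 * d ^+ 3)).
  set v0 := cubic e f g x / D0.
  set v1 := cubic e f g (x + a) / D1.
  set v2 := cubic e f g (x + a + b) / D2.
  set v3 := cubic e f g (x + a + b + c) / D3.
  have ht : `|v0 + v1 + v2 + v3| <= `|v0| + `|v1| + `|v2| + `|v3|.
    apply: (le_trans (ler_normD _ _)); rewrite lerD2r.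
    apply: (le_trans (ler_normD _ _)); rewrite lerD2r.
    exact: ler_normD.
  rewrite id normr1 in ht.
  lra.
rewrite mulrA ler_pdivlMr // mul1r; lra.
Qed.



Lemma gap (s : seq int) : sorted <%R s -> forall k i, (i + k < size s)%N ->
  nth 0 s i + k%:Z <= nth 0 s (i + k).
Proof.
move=> ss; elim=> [|k IH] i hik; first by rewrite addn0 addr0.
have h1 : (i + k < size s)%N by lia.
have := IH i h1.
have : nth 0 s (i + k) < nth 0 s (i + k.+1).
  apply: (sorted_ltn_nth lt_trans) => //; try (rewrite ?inE /=; lia).
move: (nth 0 s (i + k)) (nth 0 s (i + k.+1)) => u v; lia.
Qed.

Lemma count3 (R : realType) (e f g T : R) (S : seq int) (k : nat) : uniq S ->
  (forall m, m \in S -> `|cubic e f g m%:~R| <= T) -> (0 < k)%N -> (3 * k < size S)%N ->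
  (k%:R : R) ^+ 3 <= 2 * T.
Proof.
move=> uS hS k0 kS.
set s := sort <=%O S.
have ss : sorted <%R s by rewrite sort_lt_sorted.
have zs : size s = size S by rewrite size_sort.
have ms m : m \in s -> `|cubic e f g m%:~R| <= T by rewrite mem_sort; apply: hS.
have l1 : (0 + k < size s)%N by rewrite zs; lia.
have l2 : (k + k < size s)%N by rewrite zs; lia.
have l3 : (k + k + k < size s)%N by rewrite zs; lia.
have g1 := @gap s ss k 0 l1.
have g2 := @gap s ss k k l2.
have g3 := @gap s ss k (k + k) l3.
rewrite add0n in g1.
set x0 := nth 0 s 0 in g1.
set x1 := nth 0 s k in g1 g2.
set x2 := nth 0 s (k + k) in g2 g3.
set x3 := nth 0 s (k + k + k) in g3.
have m0 : x0 \in s by apply: mem_nth; rewrite zs; lia.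
have m1 : x1 \in s by apply: mem_nth; rewrite zs; lia.
have m2 : x2 \in s by apply: mem_nth; rewrite zs; lia.
have m3 : x3 \in s by apply: mem_nth; rewrite zs; lia.
have cv (u v : int) : k%:Z <= v - u -> (k%:R : R) <= (v - u)%:~R.
  by move=> h; rewrite -[k%:R]/((k%:Z)%:~R) ler_int.
apply: (@dd R e f g x0%:~R (x1 - x0)%:~R (x2 - x1)%:~R (x3 - x2)%:~R).
- by rewrite ltr0n.
- apply: cv; lia.
- apply: cv; lia.
- apply: cv; lia.
- exact: ms.
- have -> : x0%:~R + (x1 - x0)%:~R = x1%:~R :> R by rewrite !intrB; ring.
  exact: ms.
- have -> : x0%:~R + (x1 - x0)%:~R + (x2 - x1)%:~R = x2%:~R :> R by rewrite !intrB; ring.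
  exact: ms.
- have -> : x0%:~R + (x1 - x0)%:~R + (x2 - x1)%:~R + (x3 - x2)%:~R = x3%:~R :> R.
    by rewrite !intrB; ring.
  exact: ms.
Qed.



Lemma argmax (R : realType) (T : eqType) (a : T -> R) (S : seq T) : S != [::] ->
  exists2 x, x \in S & forall y, y \in S -> a y <= a x.
Proof.
elim: S => [//|x S IH] _.
case: S IH => [|z S] IH.
  by exists x; rewrite ?mem_seq1 // => y; rewrite mem_seq1 => /eqP ->.
have [u uS hu] := IH isT.
case: (leP (a x) (a u)) => hxu.
  exists u; first by rewrite inE uS orbT.
  by move=> y; rewrite inE => /predU1P [->|]; [|apply: hu].
exists x; first by rewrite inE eqxx.
move=> y; rewrite inE => /predU1P [->//|/hu h]; apply: (le_trans h); exact: ltW.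
Qed.

Lemma powN_anti (R : realType) (theta u v : R) : 0 <= theta -> 0 < u -> u <= v ->
  v `^ (- theta) <= u `^ (- theta).
Proof.
move=> t0 u0 uv.
have v0 : 0 < v by apply: lt_le_trans uv.
rewrite !powRN lef_pV2 ?posrE ?powR_gt0 //.
apply: ge0_ler_powR => //; rewrite nnegrE ltW //.
Qed.

Lemma keyineq (R : realType) (n k : nat) (A : R) : (n <= 3 * k + 2)%N -> 0 <= A ->
  (k%:R : R) ^+ 3 <= 2 * A -> (n.+1%:R : R) ^+ 3 / 216 <= 1 + A.
Proof.
move=> nk A0 kA.
set N : R := n.+1%:R. set K : R := k%:R.
have N0 : 0 <= N by rewrite /N ler0n.
have K0 : 0 <= K by rewrite /K ler0n.
have NK : N <= 3 * (K + 1).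
  have h : (n.+1 <= 3 * (k + 1))%N by lia.
  move: h; rewrite -(ler_nat R) natrM natrD /N /K => h; lra.
have h1 : N ^+ 3 <= (3 * (K + 1)) ^+ 3 by rewrite lerXn2r // ?nnegrE //; lra.
have h2 : 0 <= (K - 1) ^+ 2 * (K + 1) by rewrite mulr_ge0 ?sqr_ge0 //; lra.
rewrite ler_pdivrMr //.
have : (3 * (K + 1)) ^+ 3 <= 216 * (1 + A).
  rewrite exprMn.
  have e3 : (3 : R) ^+ 3 = 27 by ring.
  rewrite e3.
  have e4 : (K + 1) ^+ 3 = K ^+ 3 + 3 * K ^+ 2 + 3 * K + 1 by ring.
  have e5 : (K - 1) ^+ 2 * (K + 1) = K ^+ 3 - K ^+ 2 - K + 1 by ring.
  rewrite e4; rewrite e5 in h2; lra.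
lra.
Qed.

Lemma indsum (R : realType) (theta : R) (e f g : R) : 0 <= theta -> forall n (S : seq int),
  uniq S -> size S = n ->
  \sum_(m <- S) (jbr (cubic e f g m%:~R)) `^ (- theta) <=
  \sum_(j < n) ((j.+1%:R : R) ^+ 3 / 216) `^ (- theta).
Proof.
move=> t0; elim=> [|n IH] S uS sS.
  by move/size0nil: sS => ->; rewrite big_nil big_ord0.
have Sn : S != [::] by apply/eqP => S0; rewrite S0 in sS.
have [x xS hx] := argmax (fun m : int => `|cubic e f g m%:~R| : R) Sn.
rewrite (perm_big _ (perm_to_rem xS)) big_cons big_ord_recr /= addrC.
apply: lerD.
  apply: IH; first exact: rem_uniq.
  by rewrite size_rem // sS.
rewrite /jbr; apply: powN_anti => //.
apply: (@keyineq R n (n %/ 3)); first lia.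
  exact: normr_ge0.
case: (posnP (n %/ 3)) => [->|k0].
  by rewrite expr0n /= mulr_ge0 // normr_ge0.
apply: (count3 uS hx k0); rewrite sS; lia.
Qed.



Lemma q_lt1 (R : realType) (s : R) : 1 < s -> (2 : R) `^ (1 - s) < 1.
Proof.
move=> s1.
rewrite lt_neqAle; apply/andP; split.
  rewrite powR_eq1 negb_or negb_or; apply/and3P; split.
  - by apply/eqP; lra.
  - by rewrite -leNgt; lra.
  - by apply/eqP; lra.
rewrite -[leRHS](powRr0 2); apply: ler_powR; lra.
Qed.

Lemma dyad_block (R : realType) (s : R) (K : nat) : 0 <= s ->
  \sum_(2 ^ K <= m < 2 ^ K.+1) (m%:R : R) `^ (- s) <= ((2 : R) `^ (1 - s)) ^+ K.
Proof.
move=> s0.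
have P0 : (0 : R) < (2 ^ K)%:R by rewrite ltr0n expn_gt0.
apply: (@le_trans _ _ (\sum_(2 ^ K <= m < 2 ^ K.+1) ((2 ^ K)%:R : R) `^ (- s))).
  rewrite big_nat [leRHS]big_nat; apply: ler_sum => m /andP [h1 h2].
  by apply: powN_anti => //; rewrite ler_nat.
have e : (2 ^ K.+1 - 2 ^ K = 2 ^ K)%N by rewrite expnS mul2n -addnn addnK.
rewrite sumr_const_nat e.
rewrite -(mulr_natr (((2 ^ K)%:R : R) `^ (- s)) (2 ^ K)).
rewrite -[X in _ * X]powRr1 ?ler0n // -powRD; last by apply/implyP => _; rewrite gt_eqF.
rewrite natrX -powR_mulrn // powRAC powR_mulrn //.
by rewrite addrC.
Qed.

Lemma dyad_partial (R : realType) (s : R) (K : nat) : 0 <= s ->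
  \sum_(1 <= m < 2 ^ K) (m%:R : R) `^ (- s) <= \sum_(k < K) ((2 : R) `^ (1 - s)) ^+ k.
Proof.
move=> s0; elim: K => [|K IH].
  by rewrite big_geq // big_ord0.
rewrite (big_cat_nat _ (n := 2 ^ K)) //=; last first.
  by rewrite leq_exp2l.
  by rewrite expn_gt0.
rewrite big_ord_recr /=.
by apply: lerD => //; apply: dyad_block.
Qed.

Lemma geom_le (R : realType) (q : R) (K : nat) : 0 <= q -> q < 1 ->
  \sum_(k < K) q ^+ k <= (1 - q)^-1.
Proof.
move=> q0 q1.
have h := subrX1 q K.
have d0 : 0 < 1 - q by lra.
rewrite -div1r ler_pdivlMr // mulrC.
have : 0 <= q ^+ K by apply: exprn_ge0.
move: h; set S := \sum_(k < K) q ^+ k; set Q := q ^+ K => h hQ.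
nra.
Qed.

Lemma pseries (R : realType) (s : R) : 1 < s -> forall n,
  \sum_(j < n) (j.+1%:R : R) `^ (- s) <= (1 - (2 : R) `^ (1 - s))^-1.
Proof.
move=> s1 n.
have s0 : 0 <= s by lra.
apply: le_trans (geom_le n (powR_ge0 _ _) (q_lt1 s1)).
apply: le_trans (dyad_partial n s0).
have -> : \sum_(j < n) (j.+1%:R : R) `^ (- s) = \sum_(1 <= m < n.+1) (m%:R : R) `^ (- s).
  by rewrite big_add1 /= big_mkord.
rewrite (big_cat_nat _ (n := n.+1) (m := 1) (p := 2 ^ n)) //=; last first.
  exact: ltn_expl.
rewrite lerDl sumr_ge0 // => i _; exact: powR_ge0.
Qed.

Lemma core (R : realType) (theta : R) (htheta : 3^-1 < theta) :
  exists C : R, forall (e f g : R) (S : seq int), uniq S ->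
    \sum_(m <- S) (jbr (cubic e f g m%:~R)) `^ (- theta) <= C.
Proof.
have t0 : 0 <= theta by apply: le_trans (ltW htheta); rewrite invr_ge0.
have s1 : 1 < 3 * theta.
  by move: htheta; rewrite -(ltr_pM2l (_ : (0:R) < 3)) // mulfV.
set c := ((216 : R)^-1) `^ (- theta).
exists (c * (1 - (2 : R) `^ (1 - 3 * theta))^-1) => e f g S uS.
apply: le_trans (indsum e f g t0 uS (erefl _)) _.
have -> : \sum_(j < size S) ((j.+1%:R : R) ^+ 3 / 216) `^ (- theta) =
    c * \sum_(j < size S) (j.+1%:R : R) `^ (- (3 * theta)).
  rewrite mulr_sumr; apply: eq_bigr => j _.
  rewrite powRM ?invr_ge0 ?exprn_ge0 ?ler0n // mulrC /c; congr (_ * _).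
  by rewrite -powR_mulrn ?ler0n // -powRrM mulrN.
rewrite ler_wpM2l //; first exact: powR_ge0.
exact: pseries.
Qed.


Unset Implicit Arguments.
Local Open Scope classical_set_scope.
Local Open Scope ring_scope.

Theorem lemma3p2 (R : realType) (theta : R) (htheta : 3^-1 < theta) :
  exists C : R, forall e f g : R,
    (\esum_(m in [set: int]) ((jbr (cubic e f g m%:~R)) `^ (- theta))%:E <= C%:E)%E.
Proof.
have [C HC] := @core R theta htheta.
exists C => e f g.
apply: ge_ereal_sup => y [A [finA _] <-].
rewrite fsbig_finite // sumEFin lee_fin.
apply: HC; exact: finmap.fset_uniq.
Qed.
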